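(* Let $(S,\circ)$ be a right loop and let $T$ be an invariant right subloop of $S$ with $|T|=2$ such that the quotient right loop $S/T$ is a group. Then the group torsion $G_S$ of $S$ is an elementary abelian $2$-group.
   Context: A right loop is a set $S$ with a binary operation $\circ$ having a two-sided identity $1$ such that for all $a,b\in S$ the equation $X\circ a=b$ has a unique solution $X\in S$. A right subloop is a nonempty subset that is a right loop under the induced operation. A congruence on $S$ is an equivalence relation on $S$ which is a right subloop of $S\times S$ (componentwise operation). An invariant right subloop $T$ of $S$ is the equivalence class of $1$ of some congruence $R$ on $S$; the quotient $S/T=\{T\circ x\mid x\in S\}$ (the set of $R$-classes, where $T\circ x=\{t\circ x: t\in T\}$) is a right loop with operation $(T\circ x)\circ(T\circ y)=T\circ(x\circ y)$. For $y,z\in S$, $f^S(y,z):S\to S$ is the bijection with $f^S(y,z)(x)$ the unique solution $X$ of $X\circ(y\circ z)=(x\circ y)\circ z$; the group torsion $G_S$ is the subgroup of $\mathrm{Sym}(S)$ generated by all $f^S(y,z)$, $y,z\in S$. *)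

(* Defs.v *)
Definition is_right_loop {S : Type} (op : S -> S -> S) (one : S) : Prop :=
  (forall a, op one a = a /\ op a one = a) /\
  (forall a b, exists! X, op X a = b).

Definition right_subloop {T : Type} (op : T -> T -> T) (P : T -> Prop) : Prop :=
  (exists a, P a) /\
  (forall a b, P a -> P b -> P (op a b)) /\
  (exists e, P e /\ forall a, P a -> op e a = a /\ op a e = a) /\
  (forall a b, P a -> P b -> exists! X, P X /\ op X a = b).

Definition pairop {S : Type} (op : S -> S -> S) (p q : S * S) : S * S :=
  (op (fst p) (fst q), op (snd p) (snd q)).

Definition congruence {S : Type} (op : S -> S -> S) (R : S -> S -> Prop) : Prop :=
  (forall x, R x x) /\
  (forall x y, R x y -> R y x) /\
  (forall x y z, R x y -> R y z -> R x z) /\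
  right_subloop (pairop op) (fun p => R (fst p) (snd p)).

Definition card2 {S : Type} (P : S -> Prop) : Prop :=
  exists a b, a <> b /\ forall x, P x <-> (x = a \/ x = b).

(* The quotient right loop S/T (T = R-class of one), whose elements are the
   R-classes with operation [x][y] = [x o y], is a group: the group axioms
   written out on classes ([x] = [y] iff R x y). *)
Definition quotient_is_group {S : Type} (op : S -> S -> S) (one : S)
  (R : S -> S -> Prop) : Prop :=
  (forall x y z, R (op (op x y) z) (op x (op y z))) /\
  (forall x, R (op one x) x /\ R (op x one) x) /\
  (forall x, exists y, R (op x y) one /\ R (op y x) one).

Definition is_bij {S : Type} (h : S -> S) : Prop :=
  exists k : S -> S, (forall x, k (h x) = x) /\ (forall x, h (k x) = x).

Definition perm_subgroup {S : Type} (P : (S -> S) -> Prop) : Prop :=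
  (forall h, P h -> is_bij h) /\
  P (fun x => x) /\
  (forall g h, P g -> P h -> P (fun x => g (h x))) /\
  (forall h k, P h -> (forall x, k (h x) = x) -> (forall x, h (k x) = x) -> P k).

(* h = f^S(y,z) for some y z: h x is the (unique) solution X of
   X o (y o z) = (x o y) o z. *)
Definition torsion_gen {S : Type} (op : S -> S -> S) (h : S -> S) : Prop :=
  exists y z, forall x, op (h x) (op y z) = op (op x y) z.

(* The group torsion G_S: the subgroup of Sym(S) generated by all f^S(y,z),
   i.e. the intersection of all subgroups of Sym(S) containing them. *)
Definition torsion_group {S : Type} (op : S -> S -> S) (h : S -> S) : Prop :=
  forall P : (S -> S) -> Prop, perm_subgroup P ->
    (forall g, torsion_gen op g -> P g) -> P h.

Definition elem_abelian_2 {S : Type} (G : (S -> S) -> Prop) : Prop :=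
  forall g h, G g -> G h ->
    (forall x, g (g x) = x) /\ (forall x, g (h x) = h (g x)).

(* Main.v *)
Require Import Defs.
From Stdlib Require Import Classical ClassicalEpsilon.

Theorem mainTheorem4 (S : Type) (op : S -> S -> S) (one : S)
  (HS : is_right_loop op one)
  (R : S -> S -> Prop) (HR : congruence op R)
  (HT : card2 (fun x => R one x))
  (HQ : quotient_is_group op one R) :
  elem_abelian_2 (torsion_group op).
Proof.
  destruct HS as [Hid Hsol].
  destruct HR as [Rrefl [Rsym [Rtrans [_ [Rcl [_ Rdiv]]]]]].
  destruct HT as [a [b [Hab HTab]]].
  destruct HQ as [Qassoc [Qid Qinv]].
  assert (Huniq : forall u v w, op u w = op v w -> u = v).
  { intros u v w E. destruct (Hsol w (op v w)) as [X [_ HX]].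
    rewrite <- (HX u E). apply HX; reflexivity. }
  assert (Hcomp : forall p q r s, R p q -> R r s -> R (op p r) (op q s)).
  { intros p q r s H1 H2. exact (Rcl (p,q) (r,s) H1 H2). }
  assert (Hclass : forall x y, R x y -> y = op a x \/ y = op b x).
  { intros x y Hxy.
    destruct (Rdiv (x,x) (y,x) (Rrefl x) (Rsym _ _ Hxy)) as [[X1 X2] [[HX E] _]].
    simpl in HX. unfold pairop in E. simpl in E. injection E as E1 E2.
    assert (X2 = one). { apply (Huniq _ _ x). rewrite E2. symmetry; apply Hid. }
    subst X2. apply Rsym, HTab in HX. destruct HX as [->| ->]; [left|right]; auto. }
  assert (H3 : forall x y z w, R x y -> R x z -> R x w -> y = z \/ y = w \/ z = w).
  { intros x y z w Hy Hz Hw.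
    destruct (Hclass _ _ Hy); destruct (Hclass _ _ Hz); destruct (Hclass _ _ Hw);
      subst; auto. }
  set (P := fun h : S -> S => is_bij h /\ forall x, R x (h x)).
  assert (HP : perm_subgroup P).
  { split; [|split; [|split]].
    - intros h [Hb _]; exact Hb.
    - split. exists (fun x => x); split; reflexivity. intro; apply Rrefl.
    - intros g h [[g' [G1 G2]] Hg] [[h' [K1 K2]] Hh]. split.
      + exists (fun x => h' (g' x)). split; intro x.
        rewrite G1; apply K1. rewrite K2; apply G2.
      + intro x. eapply Rtrans; [apply Hh|apply Hg].
    - intros h k [_ Hh] E1 E2. split.
      + exists h; split; intro x; auto.
      + intro x. apply Rsym. specialize (Hh (k x)). rewrite E2 in Hh. exact Hh. }
  assert (Hgen : forall g, torsion_gen op g -> P g).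
  { intros g [y [z Hg]]. split.
    - assert (Hex : forall x, {X : S | op (op X y) z = op x (op y z)}).
      { intro x. apply constructive_indefinite_description.
        destruct (Hsol z (op x (op y z))) as [U [HU _]].
        destruct (Hsol y U) as [X [HX _]]. exists X. rewrite HX; exact HU. }
      exists (fun x => proj1_sig (Hex x)). split; intro x.
      + destruct (Hex (g x)) as [X HX]; simpl.
        rewrite Hg in HX. apply Huniq in HX. apply Huniq in HX. exact HX.
      + destruct (Hex x) as [X HX]; simpl.
        apply (Huniq _ _ (op y z)). rewrite Hg. exact HX.
    - intro x. set (w := op y z).
      destruct (Qinv w) as [w' [Hw' _]].
      assert (E : R (op (g x) w) (op x w)).
      { unfold w. rewrite Hg. apply Qassoc. }
      assert (E2 : R (op (op (g x) w) w') (op (op x w) w')) by (apply Hcomp; auto).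
      assert (C : forall u, R (op (op u w) w') u).
      { intro u. eapply Rtrans. apply Qassoc.
        eapply Rtrans. apply Hcomp. apply Rrefl. exact Hw'.
        rewrite (proj2 (Hid u)). apply Rrefl. }
      apply Rsym. eapply Rtrans. apply Rsym, C. eapply Rtrans. exact E2. apply C. }
  intros g h Hg Hh.
  destruct (Hg P HP Hgen) as [[g' [G1 G2]] Rg].
  destruct (Hh P HP Hgen) as [[h' [K1 K2]] Rh].
  assert (ginj : forall u v, g u = g v -> u = v).
  { intros u v E. rewrite <- (G1 u), <- (G1 v), E. reflexivity. }
  assert (hinj : forall u v, h u = h v -> u = v).
  { intros u v E. rewrite <- (K1 u), <- (K1 v), E. reflexivity. }
  assert (Inv : forall (f : S -> S), (forall u v, f u = f v -> u = v) ->
            (forall x, R x (f x)) -> forall x, f (f x) = x).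
  { intros f finj Rf x.
    assert (R1 : R x (f (f x))) by (eapply Rtrans; apply Rf).
    destruct (H3 x (f (f x)) (f x) x R1 (Rf x) (Rrefl x)) as [E|[E|E]].
    - apply finj in E. rewrite E. exact E.
    - exact E.
    - rewrite E. exact E. }
  split.
  - apply Inv; auto.
  - intro x.
    assert (Eg := Inv g ginj Rg x). assert (Eh := Inv h hinj Rh x).
    destruct (classic (g x = x)) as [Gx|Gx]; destruct (classic (h x = x)) as [Hx|Hx].
    + rewrite Gx, Hx. congruence.
    + rewrite Gx.
      assert (R x (g (h x))) by (eapply Rtrans; [apply Rh|apply Rg]).
      destruct (H3 x (g (h x)) x (h x) H (Rrefl x) (Rh x)) as [E|[E|E]].
      * assert (E0 : g (h x) = g x) by congruence. apply ginj in E0. contradiction.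
      * exact E.
      * symmetry in E. contradiction.
    + rewrite Hx.
      assert (R x (h (g x))) by (eapply Rtrans; [apply Rg|apply Rh]).
      destruct (H3 x (h (g x)) x (g x) H (Rrefl x) (Rg x)) as [E|[E|E]].
      * assert (E0 : h (g x) = h x) by congruence. apply hinj in E0. contradiction.
      * symmetry; exact E.
      * symmetry in E. contradiction.
    + destruct (H3 x (g x) (h x) x (Rg x) (Rh x) (Rrefl x)) as [E|[E|E]].
      * rewrite <- E, Eg, E, Eh. reflexivity.
      * contradiction.
      * contradiction.
Qed.
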